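(* Let $n\ge 2$ and let $(\epsilon_k)_{k\ge1}$ be a sequence in $(0,1)$ strictly decreasing to $0$. For $\vec a = (a_1,\dots,a_n)\in\ell^\infty_n$ and $1\le r\le n$ put $\varphi^r_k(\vec a) = a_r(1-\epsilon_k) + \frac{\epsilon_k}{n-1}\sum_{j\ne r}a_j$, and $\psi_k(\vec a) = (\varphi^1_k(\vec a),\dots,\varphi^n_k(\vec a))\in\ell^\infty_n$. Let $H = \bigoplus_{k=1}^\infty H_k$ with each $H_k = \mathbb{C}^n$, and define $\Psi : \ell^\infty_n\to B(H)$ by letting $\Psi(\vec a)$ be the diagonal operator acting on $H_k$ as the diagonal matrix with diagonal $\psi_k(\vec a)$. Then $\Psi$ is a unital complete isometry, and if $p,q\in B(H)$ are projections such that $(1-q)\Psi(\vec a) = \Psi(\vec a)(1-p)$ for all $\vec a$ and $\vec a\mapsto (1-q)\Psi(\vec a)$ is a triple morphism, then $p = q = 1$ (so this triple morphism is the zero map). In particular, there is no projection $p\in B(H)$ other than $1$ for which $(1-p)\Psi(\cdot) = \Psi(\cdot)(1-p)$ is a *-homomorphism.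
   Context: $\ell^\infty_n$ is $\mathbb{C}^n$ with the sup norm, a commutative $C^*$-algebra. A triple morphism is a linear map $T$ with $T(xy^*z) = T(x)T(y)^*T(z)$. *)

(* Defs.v *)
From HB Require Import structures.
From mathcomp Require Import all_boot all_order all_algebra.
From mathcomp Require Import all_classical all_reals all_analysis.
From mathcomp Require Import complex.
Set Implicit Arguments. Unset Strict Implicit. Unset Printing Implicit Defensive.
Import Order.TTheory GRing.Theory Num.Theory.
Import numFieldNormedType.Exports.
Local Open Scope ring_scope.
Local Open Scope classical_set_scope.

Section Defs.
Variables (R : realType) (n : nat).
Local Notation C := (R[i]).

(* ell^infty_n = C^n (commutative C*-algebra, pointwise operations). *)
Definition linf := 'I_n -> C.

(* Vectors indexed like H = (+)_{k} H_k, H_k = C^n : x k i is the i-th coordinate in H_k.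
   (H_k is indexed by k : nat starting at 0.) *)
Definition vecH := nat -> 'I_n -> C.

Definition csq (z : C) : R := complex.Re z ^+ 2 + complex.Im z ^+ 2.

Definition sqnormH (x : vecH) : \bar R :=
  (\sum_(k <oo) (\sum_(i < n) csq (x k i))%:E)%E.

Definition inH (x : vecH) : Prop := (sqnormH x < +oo)%E.

Definition normH (x : vecH) : R := Num.sqrt (fine (sqnormH x)).

Definition innerH (x y : vecH) : C :=
  Complex (limn (fun N : nat => \sum_(0 <= k < N) (complex.Re (\sum_(i < n) x k i * conjc (y k i)) : R)))
          (limn (fun N : nat => \sum_(0 <= k < N) (complex.Im (\sum_(i < n) x k i * conjc (y k i)) : R))).

Definition op := vecH -> vecH.

Definition op_eq (T S : op) : Prop := forall x, inH x -> T x = S x.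

Definition idop : op := fun x => x.

Definition bounded_op (T : op) : Prop :=
  [/\ forall x, inH x -> inH (T x),
      forall (c : C) x y, inH x -> inH y ->
        T (fun k i => c * x k i + y k i) = (fun k i => c * T x k i + T y k i)
    & exists M : R, forall x, inH x -> normH (T x) <= M * normH x].

Definition is_adjoint (T S : op) : Prop :=
  (forall y, inH y -> inH (S y)) /\
  forall x y, inH x -> inH y -> innerH (T x) y = innerH x (S y).

Definition projection (p : op) : Prop :=
  [/\ bounded_op p, forall x, inH x -> p (p x) = p x & is_adjoint p p].

Definition op_linear (F : linf -> op) : Prop :=
  forall (c : C) (a b : linf),
    op_eq (F (fun r => c * a r + b r)) (fun x k i => c * F a x k i + F b x k i).

Definition triple_morphism (F : linf -> op) : Prop :=
  op_linear F /\
  forall (a b c : linf) (S : op), is_adjoint (F b) S ->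
    op_eq (F (fun r => a r * conjc (b r) * c r)) (fun x => F a (S (F c x))).

Definition star_hom (F : linf -> op) : Prop :=
  [/\ op_linear F,
      forall a b : linf, op_eq (F (fun r => a r * b r)) (fun x => F a (F b x))
    & forall a : linf, is_adjoint (F a) (F (fun r => conjc (a r)))].

(* the maps of the statement; eps k is epsilon_{k+1} *)
Definition psi (eps : nat -> R) (k : nat) (a : linf) : linf :=
  fun r => a r * ((1 - eps k)%:C)%C + ((eps k / (n.-1)%:R)%:C)%C * \sum_(j < n | j != r) a j.

Definition Psi (eps : nat -> R) (a : linf) : op :=
  fun x k i => psi eps k a i * x k i.

Definition normCv (m : nat) (v : 'I_m -> C) : R := Num.sqrt (\sum_(i < m) csq (v i)).

Definition normCmx (m : nat) (B : 'I_m -> 'I_m -> C) : \bar R :=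
  ereal_sup [set (normCv (fun i => \sum_(j < m) B i j * v j))%:E
            | v in [set v : 'I_m -> C | normCv v <= 1]].

(* C*-norm on M_m(ell^infty_n) = M_m(C)^n : max over coordinates *)
Definition mnorm_linf (m : nat) (A : 'I_m -> 'I_m -> linf) : \bar R :=
  ereal_sup [set normCmx (fun i j => A i j r) | r in [set: 'I_n]].

Definition normHm (m : nat) (xs : 'I_m -> vecH) : R :=
  Num.sqrt (\sum_(i < m) normH (xs i) ^+ 2).

(* norm on M_m(B(H)) = B(H^m) *)
Definition mnorm_BH (m : nat) (T : 'I_m -> 'I_m -> op) : \bar R :=
  ereal_sup [set (normHm (fun i k s => \sum_(j < m) T i j (xs j) k s))%:E
            | xs in [set xs : 'I_m -> vecH | (forall j, inH (xs j)) /\ normHm xs <= 1]].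

Definition unital_complete_isometry (F : linf -> op) : Prop :=
  [/\ op_linear F,
      op_eq (F (fun _ => 1)) idop
    & forall (m : nat) (A : 'I_m -> 'I_m -> linf),
        mnorm_linf A = mnorm_BH (fun i j => F (A i j))].

End Defs.

(* Main.v *)
Require Import Defs.
From HB Require Import structures.
From mathcomp Require Import all_boot all_order all_algebra.
From mathcomp Require Import all_classical all_reals all_analysis.
From mathcomp Require Import complex.
Import Order.TTheory GRing.Theory Num.Theory.
Local Open Scope ring_scope.
Local Open Scope classical_set_scope.

From mathcomp Require Import ring lra.
Set Implicit Arguments. Unset Strict Implicit. Unset Printing Implicit Defensive.
Import numFieldNormedType.Exports.

Section H1.
Variable R : realType.
Local Notation C := (R[i]).

Lemma csq_ge0 (z : C) : 0 <= csq z.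
Proof. by rewrite /csq addr_ge0 // sqr_ge0. Qed.

Lemma csqM (w z : C) : csq (w * z) = csq w * csq z.
Proof. case: w => a b; case: z => c d; rewrite /csq /=. ring. Qed.

Lemma csqB (w z : C) : csq (w - z) <= 2 * (csq w + csq z).
Proof. case: w => a b; case: z => c d; rewrite /csq /=.
have := sqr_ge0 (a+c); have := sqr_ge0 (b+d). nra. Qed.

Lemma ReMJ (w z : C) : `|complex.Re (w * conjc z)| <= csq w + csq z.
Proof. case: w => a b; case: z => c d; rewrite /csq /=.
have := sqr_ge0 (a+c); have := sqr_ge0 (b+d); have := sqr_ge0 (a-c); have := sqr_ge0 (b-d).
have := sqr_ge0 (a+d); have := sqr_ge0 (b+c); have := sqr_ge0 (a-d); have := sqr_ge0 (b-c).
move=> *; rewrite ler_norml; apply/andP; split; nra. Qed.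
Lemma ImMJ (w z : C) : `|complex.Im (w * conjc z)| <= csq w + csq z.
Proof. case: w => a b; case: z => c d; rewrite /csq /=.
have := sqr_ge0 (a+c); have := sqr_ge0 (b+d); have := sqr_ge0 (a-c); have := sqr_ge0 (b-d).
have := sqr_ge0 (a+d); have := sqr_ge0 (b+c); have := sqr_ge0 (a-d); have := sqr_ge0 (b-c).
move=> *; rewrite ler_norml; apply/andP; split; nra. Qed.
Lemma csq_eq0 (z : C) : csq z = 0 -> z = 0.
Proof. case: z => a b; rewrite /csq /= => h.
have ha : a = 0 by apply/eqP; rewrite -sqrf_eq0; apply/eqP; nra.
have hb : b = 0 by apply/eqP; rewrite -sqrf_eq0; apply/eqP; nra.
by rewrite ha hb. Qed.

Lemma csq_real (c : R) : csq (c%:C)%C = c ^+ 2.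
Proof. by rewrite /csq /= expr0n /= addr0. Qed.

Lemma e0le (x : R) : 0 <= x -> (0 <= x%:E)%E.
Proof. by rewrite lee_fin. Qed.

Lemma cvg_of_bound (a s : nat -> R) : (forall k, `|a k| <= s k) ->
  cvgn (series s) -> cvgn (series a).
Proof.
move=> hb hs.
have hu : cvgn (series (a + s)).
  apply: (@series_le_cvg _ _ (s + s)).
  - by move=> k; rewrite /= -lerBlDr sub0r; have := hb k; rewrite ler_norml => /andP[].
  - by move=> k; rewrite /= addr_ge0 // (le_trans _ (hb k)).
  - by move=> k; rewrite /= lerD2r; have := hb k; rewrite ler_norml => /andP[].
  by rewrite seriesD; apply: is_cvgD.
have -> : series a = series (a + s) - series s.
  by rewrite seriesD; apply/funext => k /=; rewrite addrK.
exact: is_cvgB.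
Qed.
End H1.

Section H2.
Variables (R : realType) (n : nat).
Local Notation C := (R[i]).
Local Notation vH := (vecH R n).

Definition rowsq (x : vH) k := \sum_(i < n) csq (x k i).

Lemma rowsq_ge0 x k : 0 <= rowsq x k.
Proof. by apply: sumr_ge0 => i _; apply: csq_ge0. Qed.

Lemma sqnormH_ge0 (x : vH) : (0 <= sqnormH x)%E.
Proof. by apply: nneseries_ge0 => k _ _; rewrite lee_fin; apply: rowsq_ge0. Qed.

Lemma inH_bound (x y z : vH) (M : R) : 0 <= M ->
  (forall k, rowsq z k <= M * (rowsq x k + rowsq y k)) -> inH x -> inH y -> inH z.
Proof.
move=> M0 hb hx hy; rewrite /inH.
apply: (@le_lt_trans _ _ (\sum_(k <oo) (M * (rowsq x k + rowsq y k))%:E)%E).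
  apply: lee_nneseries => [k _ _|k _]; rewrite lee_fin //; [exact: rowsq_ge0|exact: hb].
under eq_eseriesr do rewrite EFinM.
rewrite nneseriesZl; last first.
  by move=> k _; apply: e0le; rewrite addr_ge0 // rowsq_ge0.
apply: lte_mul_pinfty => //.
under eq_eseriesr do rewrite EFinD.
rewrite nneseriesD; [|by move=> k _ _ /=; apply: e0le; apply: rowsq_ge0..].
by apply: lte_add_pinfty.
Qed.

Lemma inH_cvg (x : vH) : inH x -> cvgn (series (rowsq x)).
Proof. by move=> hx; apply: nnseries_is_cvg => // k; apply: rowsq_ge0. Qed.

Lemma inH_sub (x y : vH) : inH x -> inH y -> inH (fun k i => x k i - y k i).
Proof.
move=> hx hy; apply: (@inH_bound x y _ 2 _ _ hx hy) => // k.
rewrite /rowsq -big_split mulr_sumr /=; apply: ler_sum => i _; exact: csqB.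
Qed.

Lemma inH_mul (c : nat -> 'I_n -> C) (M : R) (x : vH) : 0 <= M ->
  (forall k i, csq (c k i) <= M) -> inH x -> inH (fun k i => c k i * x k i).
Proof.
move=> M0 hc hx; apply: (@inH_bound x x _ M M0 _ hx hx) => k.
apply: (@le_trans _ _ (M * rowsq x k)).
  rewrite /rowsq mulr_sumr; apply: ler_sum => i _; rewrite csqM.
  by apply: ler_wpM2r; [exact: csq_ge0| exact: hc].
by rewrite ler_wpM2l // lerDl rowsq_ge0.
Qed.

Definition ipk (x y : vH) k := \sum_(i < n) x k i * conjc (y k i).

Lemma cvg_ReIm_ip (x y : vH) : inH x -> inH y ->
  cvgn (series (fun k => complex.Re (ipk x y k))) /\
  cvgn (series (fun k => complex.Im (ipk x y k))).
Proof.
move=> hx hy.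
have hs : cvgn (series (fun k => rowsq x k + rowsq y k)).
  have -> : (fun k => rowsq x k + rowsq y k) = rowsq x + rowsq y by [].
  by rewrite seriesD; apply: is_cvgD; apply: inH_cvg.
split; apply: cvg_of_bound hs => k; rewrite /ipk /rowsq -big_split /=.
  rewrite raddf_sum; apply: (le_trans (ler_norm_sum _ _ _)); apply: ler_sum => i _.
  exact: ReMJ.
rewrite raddf_sum; apply: (le_trans (ler_norm_sum _ _ _)); apply: ler_sum => i _.
exact: ImMJ.
Qed.

Lemma innerHE (x y : vH) : innerH x y =
  Complex (limn (series (fun k => complex.Re (ipk x y k))))
          (limn (series (fun k => complex.Im (ipk x y k)))).
Proof. by []. Qed.

Lemma innerHB1 (u v w : vH) : inH u -> inH v -> inH w ->
  innerH (fun k i => u k i - v k i) w = innerH u w - innerH v w.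
Proof.
move=> hu hv hw; rewrite !innerHE.
have [cu1 cu2] := cvg_ReIm_ip hu hw.
have [cv1 cv2] := cvg_ReIm_ip hv hw.
have e1 : series (fun k => complex.Re (ipk (fun k i => u k i - v k i) w k)) =
  series (fun k => complex.Re (ipk u w k)) - series (fun k => complex.Re (ipk v w k)).
  apply/funext => N; rewrite /series !fctE /= -sumrB; apply: eq_bigr => k _.
  by rewrite /ipk -raddfB -sumrB; congr complex.Re; apply: eq_bigr => i _; rewrite mulrBl.
have e2 : series (fun k => complex.Im (ipk (fun k i => u k i - v k i) w k)) =
  series (fun k => complex.Im (ipk u w k)) - series (fun k => complex.Im (ipk v w k)).
  apply/funext => N; rewrite /series !fctE /= -sumrB; apply: eq_bigr => k _.
  by rewrite /ipk -raddfB -sumrB; congr complex.Im; apply: eq_bigr => i _; rewrite mulrBl.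
rewrite e1 e2 !limB //.
Qed.

Lemma innerHB2 (u v w : vH) : inH u -> inH v -> inH w ->
  innerH w (fun k i => u k i - v k i) = innerH w u - innerH w v.
Proof.
move=> hu hv hw; rewrite !innerHE.
have [cu1 cu2] := cvg_ReIm_ip hw hu.
have [cv1 cv2] := cvg_ReIm_ip hw hv.
have e1 : series (fun k => complex.Re (ipk w (fun k i => u k i - v k i) k)) =
  series (fun k => complex.Re (ipk w u k)) - series (fun k => complex.Re (ipk w v k)).
  apply/funext => N; rewrite /series !fctE /= -sumrB; apply: eq_bigr => k _.
  by rewrite /ipk -raddfB -sumrB; congr complex.Re; apply: eq_bigr => i _; rewrite rmorphB mulrBr.
have e2 : series (fun k => complex.Im (ipk w (fun k i => u k i - v k i) k)) =
  series (fun k => complex.Im (ipk w u k)) - series (fun k => complex.Im (ipk w v k)).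
  apply/funext => N; rewrite /series !fctE /= -sumrB; apply: eq_bigr => k _.
  by rewrite /ipk -raddfB -sumrB; congr complex.Im; apply: eq_bigr => i _; rewrite rmorphB mulrBr.
rewrite e1 e2 !limB //.
Qed.
End H2.

Section P.
Variables (R : realType) (n : nat) (eps : nat -> R).
Hypothesis hn : (2 <= n)%N.
Hypothesis heps : forall k, 0 < eps k < 1.
Local Notation C := (R[i]).
Local Notation vH := (vecH R n).

Lemma nm1_gt0 : (0 < n.-1)%N.
Proof. by case: n hn => [|[|m]]. Qed.

Lemma card_neq (r : 'I_n) : #|[pred j : 'I_n | j != r]| = n.-1.
Proof.
have := cardC1 r; rewrite card_ord => <-.
by apply: eq_card => j; rewrite !inE.
Qed.

Lemma sum_neq_const (r : 'I_n) (c : C) : \sum_(j < n | j != r) c = c *+ n.-1.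
Proof. rewrite sumr_const -(card_neq r); congr (_ *+ _); by apply: eq_card. Qed.

Lemma psi1 k (r : 'I_n) : psi eps k (fun _ => 1) r = 1.
Proof.
rewrite /psi sum_neq_const mul1r -mulr_natr.
have hm : (n.-1%:R : R) != 0 by rewrite pnatr_eq0 -lt0n nm1_gt0.
have -> : ((n.-1)%:R : C) = ((n.-1)%:R : R)%:C%C by rewrite rmorph_nat.
rewrite -rmorphM /= mul1r mulfVK // -rmorphD /=.
by rewrite subrK.
Qed.

Lemma Psi1 (x : vH) : Psi eps (fun _ => 1) x = x.
Proof. by apply/funext => k; apply/funext => i; rewrite /Psi psi1 mul1r. Qed.

Definition ee (r : 'I_n) : linf R n := fun j => if j == r then 1 else 0.

Lemma psi_ee k (r i : 'I_n) : exists c0 : R, 0 < c0 < 1 /\ psi eps k (ee r) i = (c0%:C)%C.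
Proof.
have he := heps k; move/andP: he => [e0 e1].
have hm : (0 < (n.-1)%:R :> R) by rewrite ltr0n nm1_gt0.
have hm1 : (1 <= (n.-1)%:R :> R) by rewrite ler1n nm1_gt0.
rewrite /psi /ee /=; case: (eqVneq i r) => [->|hir].
  exists (1 - eps k); split; first by apply/andP; split; lra.
  rewrite mul1r big1 ?mulr0 ?addr0 // => j hj; by rewrite (negbTE hj).
exists (eps k / (n.-1)%:R); split.
  apply/andP; split; first by rewrite divr_gt0.
  rewrite ltr_pdivrMr //; nra.
rewrite mul0r add0r (bigD1 r) 1?eq_sym //= eqxx big1 ?addr0 ?mulr1 //.
by move=> j /andP[_ hj]; rewrite (negbTE hj).
Qed.

Lemma cancel_c (c0 : R) (y : C) : 0 < c0 < 1 ->
  (c0%:C)%C * ((c0%:C)%C * y) = (c0%:C)%C * y -> y = 0.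
Proof.
move=> /andP[h0 h1] h.
have : ((c0%:C)%C * ((c0 - 1)%:C)%C) * y = 0.
  by rewrite rmorphB /= mulrBr mulr1 mulrBl -mulrA h subrr.
rewrite -rmorphM /= => /eqP; rewrite mulf_eq0 => /orP[|/eqP //].
move=> /eqP [] /eqP; rewrite mulf_eq0 => /orP[] /eqP hc; exfalso; lra.
Qed.

Lemma inH_Psi_ee r (x : vH) : inH x -> inH (Psi eps (ee r) x).
Proof.
apply: (inH_mul (M := 1)) => // k i.
have [c0 [/andP[h0 h1] ->]] := psi_ee k r i.
by rewrite csq_real; nra.
Qed.

Lemma ee_sq r : (fun j => ee r j * ee r j) = ee r.
Proof. by apply/funext => j; rewrite /ee; case: (j == r); rewrite ?mulr1 ?mulr0. Qed.

Lemma ee_tri r : (fun j => ee r j * conjc 1 * ee r j) = ee r.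
Proof. by apply/funext => j; rewrite conjc1 mulr1 /ee; case: (j == r); rewrite ?mulr1 ?mulr0. Qed.


Lemma key (p : op R n) (x : vH) : projection p -> inH x ->
  inH (fun k i => x k i - p x k i) /\ p (fun k i => x k i - p x k i) = (fun _ _ => 0).
Proof.
move=> [[hin hlin _] hid _] hx; split; first exact: inH_sub (hin _ hx).
have -> : (fun k i => x k i - p x k i) = (fun k i => -1 * p x k i + x k i).
  by apply/funext => k; apply/funext => i; rewrite mulN1r addrC.
rewrite hlin; [|exact: hin|done]. rewrite hid //.
by apply/funext => k; apply/funext => i; rewrite mulN1r addNr.
Qed.

Lemma y0 (y : vH) : (forall r, Psi eps (ee r) (Psi eps (ee r) y) = Psi eps (ee r) y) ->
  forall k i, y k i = 0.
Proof.
move=> h k i; have := h i; move/(congr1 (fun f => f k i)); rewrite /Psi.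
have [c0 [hc ->]] := psi_ee k i i.
exact: cancel_c.
Qed.

Lemma fun0 (x y : vH) : (fun k i => x k i - y k i) = x -> y = (fun _ _ => 0).
Proof.
move=> h; apply/funext => k; apply/funext => i.
have := congr1 (fun f => f k i) h => /= /eqP; rewrite subr_eq addrC -subr_eq subrr.
by move/eqP.
Qed.

Lemma fromy0 (p : op R n) (x : vH) :
  (forall k i, x k i - p x k i = 0) -> p x = x.
Proof.
move=> h; apply/funext => k; apply/funext => i; apply/eqP.
by rewrite eq_sym -subr_eq0 h.
Qed.


Lemma part3 (p : op R n) : projection p ->
  (forall (a : linf R n) (x : vecH R n), inH x ->
     (fun k i => Psi eps a x k i - p (Psi eps a x) k i)
     = Psi eps a (fun k i => x k i - p x k i)) ->
  star_hom (fun a x k i => Psi eps a x k i - p (Psi eps a x) k i) ->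
  op_eq p (@idop R n).
Proof.
move=> hp hcomm [_ hmul _] x hx; rewrite /idop; apply: fromy0.
have [hy py0] := key hp hx.
apply: y0 => r.
have h1 := hcomm (ee r) _ hy; rewrite py0 in h1.
have ez : (fun k i => (fun k0 i0 => x k0 i0 - p x k0 i0) k i - (fun _ _ => 0) k i)
   = (fun k i => x k i - p x k i).
  by apply/funext => k; apply/funext => i; rewrite subr0.
rewrite ez in h1.
have pz0 := fun0 h1.
have hz := inH_Psi_ee r hy.
have h2 := hcomm (ee r) _ hz; rewrite pz0 in h2.
have ez2 : forall w : vH, (fun k i => w k i - (fun _ _ => 0) k i) = w.
  by move=> w; apply/funext => k; apply/funext => i; rewrite subr0.
rewrite ez2 in h2.
have h3 := hmul (ee r) (ee r) _ hy; rewrite ee_sq in h3.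
cbv beta in h3; rewrite h1 h2 in h3.
by rewrite -h3.
Qed.

Lemma part2 (p q : op R n) : projection p -> projection q ->
  (forall (a : linf R n) (x : vecH R n), inH x ->
     (fun k i => Psi eps a x k i - q (Psi eps a x) k i)
     = Psi eps a (fun k i => x k i - p x k i)) ->
  triple_morphism (fun a x k i => Psi eps a x k i - q (Psi eps a x) k i) ->
  op_eq p (@idop R n) /\ op_eq q (@idop R n).
Proof.
move=> hp hq hcomm [_ htri].
have hpq : forall x, inH x -> q x = p x.
  move=> x hx; have := hcomm (fun _ => 1) x hx; rewrite !Psi1 => h.
  apply/funext => k; apply/funext => i.
  have := congr1 (fun f => f k i) h => /= /eqP; rewrite -subr_eq0 opprB addrC subrKA subr_eq0.
  by move/eqP.
have hpid : op_eq p (@idop R n).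
  move=> x hx; rewrite /idop; apply: fromy0.
  have [hy py0] := key hp hx.
  apply: y0 => r.
  have h1 := hcomm (ee r) _ hy; rewrite py0 in h1.
  have ez2 : forall w : vH, (fun k i => w k i - (fun _ _ => 0) k i) = w.
    by move=> w; apply/funext => k; apply/funext => i; rewrite subr0.
  rewrite ez2 in h1.
  have hz := inH_Psi_ee r hy.
  have qz0 := fun0 h1.
  have pz0 : p (Psi eps (ee r) (fun k i => x k i - p x k i)) = (fun _ _ => 0) by rewrite -hpq.
  have h2 := hcomm (ee r) _ hz; rewrite pz0 ez2 in h2.
  have hadj : is_adjoint ((fun a x k i => Psi eps a x k i - q (Psi eps a x) k i) (fun _ => 1))
      (fun w k i => w k i - q w k i).
    have [[hqin _ _] _ [_ hqadj]] := hq.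
    split; first by move=> w hw; apply: inH_sub (hqin _ hw).
    move=> u w hu hw /=; rewrite Psi1 innerHB1 ?innerHB2 ?hqadj //; exact: hqin.
  have h3 := htri (ee r) (fun _ => 1) (ee r) _ hadj _ hy.
  rewrite ee_tri in h3; cbv beta in h3.
  have ez3 : forall w : vH, (fun k i => w k i - 0) = w.
    by move=> w; apply/funext => k; apply/funext => i; rewrite subr0.
  rewrite h1 qz0 in h3; rewrite ?ez2 ?ez3 in h3; rewrite h2 in h3.
  by rewrite -h3.
split => // x hx; rewrite hpq //; exact: hpid.
Qed.

End P.

Section NC.
Variables (R : realType) (m : nat).
Local Notation C := (R[i]).
Implicit Types u v w : 'I_m -> C.

Definition dot (a b : C) := complex.Re a * complex.Re b + complex.Im a * complex.Im b.

Lemma csqD (a b : C) : csq (a + b) = csq a + csq b + 2 * dot a b.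
Proof. case: a => a1 a2; case: b => b1 b2; rewrite /csq /dot /=; ring. Qed.

Lemma csq_comb (X Y : R) (a b : C) :
  csq ((Y%:C)%C * a - (X%:C)%C * b) = Y^+2 * csq a - 2 * X * Y * dot a b + X^+2 * csq b.
Proof. case: a => a1 a2; case: b => b1 b2; rewrite /csq /dot /=; ring. Qed.

Lemma sumcsq_ge0 v : 0 <= \sum_i csq (v i).
Proof. by apply: sumr_ge0 => i _; apply: csq_ge0. Qed.

Lemma normCv_ge0 v : 0 <= normCv v.
Proof. exact: sqrtr_ge0. Qed.

Lemma normCv_sq v : normCv v ^+ 2 = \sum_i csq (v i).
Proof. by rewrite /normCv sqr_sqrtr // sumcsq_ge0. Qed.

Lemma normCv_le v (b : R) : 0 <= b -> \sum_i csq (v i) <= b ^+ 2 -> normCv v <= b.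
Proof.
move=> b0 h; rewrite /normCv -(ger0_norm b0) -sqrtr_sqr ler_sqrt //.
exact: sqr_ge0.
Qed.

Lemma normCv_eq0 v : normCv v = 0 -> forall i, v i = 0.
Proof.
move=> /eqP; rewrite /normCv sqrtr_eq0 => h i.
have h0 : \sum_i csq (v i) = 0 by apply/eqP; rewrite eq_le h sumcsq_ge0.
apply: csq_eq0.
by move/psumr_eq0P: h0 => -> // j _; apply: csq_ge0.
Qed.

Lemma CS u v : \sum_i dot (u i) (v i) <= normCv u * normCv v.
Proof.
set X := normCv u; set Y := normCv v.
have X0 : 0 <= X by apply: normCv_ge0.
have Y0 : 0 <= Y by apply: normCv_ge0.
have [Xe|Xn] := eqVneq X 0.
  have hu := normCv_eq0 Xe.
  rewrite big1 ?Xe ?mul0r // => i _; rewrite hu /dot /=; ring.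
have [Ye|Yn] := eqVneq Y 0.
  have hv := normCv_eq0 Ye.
  rewrite big1 ?Ye ?mulr0 // => i _; rewrite hv /dot /=; ring.
have Xp : 0 < X by rewrite lt_def Xn.
have Yp : 0 < Y by rewrite lt_def Yn.
have h : 0 <= \sum_i csq ((Y%:C)%C * u i - (X%:C)%C * v i) by apply: sumcsq_ge0.
rewrite (eq_bigr _ (fun i _ => csq_comb X Y (u i) (v i))) in h.
rewrite !big_split /= sumrN -!mulr_sumr in h.
rewrite -!normCv_sq -/X -/Y in h.
have hXY : 0 < X * Y by apply: mulr_gt0.
set D := \sum_i dot (u i) (v i) in h *.
have : 2 * (X * Y) * D <= 2 * (X * Y) * (X * Y) by nra.
by rewrite ler_pM2l ?mulr_gt0.
Qed.

Lemma normCvD u v : normCv (fun i => u i + v i) <= normCv u + normCv v.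
Proof.
apply: normCv_le; first by rewrite addr_ge0 ?normCv_ge0.
rewrite (eq_bigr _ (fun i _ => csqD (u i) (v i))) big_split big_split /= -mulr_sumr.
rewrite -!normCv_sq.
have := CS u v; nra.
Qed.

Lemma normCvZ (c : R) v : normCv (fun i => (c%:C)%C * v i) = `|c| * normCv v.
Proof.
rewrite /normCv (eq_bigr (fun i => c ^+ 2 * csq (v i))); last first.
  by move=> i _; rewrite csqM csq_real.
by rewrite -mulr_sumr sqrtrM ?sqr_ge0 // sqrtr_sqr.
Qed.

Lemma normCv0 : normCv (fun _ : 'I_m => 0 : C) = 0.
Proof.
rewrite /normCv big1 ?sqrtr0 // => i _; rewrite /csq /=; ring.
Qed.

Lemma normCv_sum (I : Type) (l : seq I) (P : pred I) (f : I -> 'I_m -> C) :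
  normCv (fun i => \sum_(s <- l | P s) f s i) <= \sum_(s <- l | P s) normCv (f s).
Proof.
elim: l => [|s l IH].
  have -> : (fun i => \sum_(s <- [::] | P s) f s i) = (fun _ => 0).
    by apply/funext => i; rewrite big_nil.
  by rewrite big_nil normCv0.
have -> : (fun i => \sum_(s0 <- s :: l | P s0) f s0 i) = (fun i => if P s then
   f s i + \sum_(s0 <- l | P s0) f s0 i else \sum_(s0 <- l | P s0) f s0 i).
  by apply/funext => i; rewrite big_cons.
rewrite big_cons; case: (P s) => //.
by apply: (le_trans (normCvD _ _)); rewrite lerD2l.
Qed.
End NC.

Section Q.
Variables (R : realType) (n : nat) (eps : nat -> R).
Hypothesis hn : (2 <= n)%N.
Hypothesis heps : forall k, 0 < eps k < 1.
Hypothesis hlim : eps @ \oo --> 0.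
Local Notation C := (R[i]).
Local Notation vH := (vecH R n).

Definition mv (m : nat) (B : 'I_m -> 'I_m -> C) (v : 'I_m -> C) : 'I_m -> C :=
  fun i => \sum_j B i j * v j.
Definition Ar (m : nat) (A : 'I_m -> 'I_m -> linf R n) r := fun i j => A i j r.
Definition Mk (m : nat) (A : 'I_m -> 'I_m -> linf R n) k s :=
  fun i j => psi eps k (A i j) s.

Lemma mv_psi m (A : 'I_m -> 'I_m -> linf R n) k s w :
  mv (Mk A k s) w = fun i => ((1 - eps k)%:C)%C * mv (Ar A s) w i +
     ((eps k / (n.-1)%:R)%:C)%C * \sum_(t < n | t != s) mv (Ar A t) w i.
Proof.
apply/funext => i; rewrite /mv /Mk /Ar /psi.
rewrite exchange_big /= !mulr_sumr -big_split /=; apply: eq_bigr => j _.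
rewrite -mulr_suml; ring.
Qed.

Lemma mvZ m (B : 'I_m -> 'I_m -> C) (c : C) v :
  mv B (fun j => c * v j) = fun i => c * mv B v i.
Proof.
by apply/funext => i; rewrite /mv mulr_sumr; apply: eq_bigr => j _; rewrite mulrCA.
Qed.

Lemma mv0 m (B : 'I_m -> 'I_m -> C) : mv B (fun _ => 0) = fun _ => 0.
Proof. by apply/funext => i; rewrite /mv big1 // => j _; rewrite mulr0. Qed.

Lemma lim_le (x B K : R) : 0 <= K -> (forall k, x <= B + eps k * K) -> x <= B.
Proof.
move=> K0 h; rewrite leNgt; apply/negP => hlt.
have hd : 0 < (x - B) / (K + 1) by rewrite divr_gt0 // ?subr_gt0 //; lra.
have [k /= hk] := filter_ex ((cvgrPdist_lt _ _).1 hlim _ hd).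
rewrite sub0r normrN in hk.
have e0 : 0 < eps k by case/andP: (heps k).
rewrite gtr0_norm // in hk.
have hk2 : eps k * (K + 1) < x - B by rewrite -ltr_pdivlMr //; lra.
have := h k; nra.
Qed.

Lemma normCmx_ge0 m (B : 'I_m -> 'I_m -> C) : (0 <= normCmx B)%E.
Proof.
apply: le_ereal_sup_tmp; exists (normCv (mv B (fun _ => 0)))%:E.
  by exists (fun _ => 0) => //=; rewrite normCv0 ler01.
by rewrite mv0 normCv0.
Qed.

Lemma normCmx_ub m (B : 'I_m -> 'I_m -> C) v : normCv v <= 1 ->
  ((normCv (mv B v))%:E <= normCmx B)%E.
Proof. by move=> hv; apply: ereal_sup_ubound; exists v. Qed.

Lemma mnorm_linf_ge0 m (A : 'I_m -> 'I_m -> linf R n) : (0 <= mnorm_linf A)%E.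
Proof.
have hn0 : (0 < n)%N by apply: ltnW.
apply: le_ereal_sup_tmp; exists (normCmx (Ar A (Ordinal hn0))).
  by exists (Ordinal hn0).
exact: normCmx_ge0.
Qed.

Lemma sqrt_le (a b : R) : 0 <= b -> a <= b ^+ 2 -> Num.sqrt a <= b.
Proof.
move=> b0 h; rewrite -(ger0_norm b0) -sqrtr_sqr ler_sqrt //; exact: sqr_ge0.
Qed.

Lemma upper m (A : 'I_m -> 'I_m -> linf R n) :
  (mnorm_BH (fun i j => Psi eps (A i j)) <= mnorm_linf A)%E.
Proof.
have hNge := mnorm_linf_ge0 A.
case hN: (mnorm_linf A) hNge => [N'| |] hNge; last by [].
  2: by rewrite leey.
have N0 : 0 <= N' by move: hNge; rewrite lee_fin.
have hB1 : forall s v, normCv v <= 1 -> normCv (mv (Ar A s) v) <= N'.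
  move=> s v hv; rewrite -lee_fin -hN; apply: le_trans (normCmx_ub _ hv) _.
  by apply: ereal_sup_ubound; exists s.
have hB2 : forall s w, normCv (mv (Ar A s) w) <= N' * normCv w.
  move=> s w; have [w0|wn] := eqVneq (normCv w) 0.
    have -> : w = fun _ => 0 by apply/funext => i; apply: normCv_eq0.
    by rewrite mv0 normCv0 mulr0.
  have wp : 0 < normCv w by rewrite lt_def wn normCv_ge0.
  have := hB1 s (fun j => (((normCv w)^-1)%:C)%C * w j).
  rewrite mvZ !normCvZ gtr0_norm ?invr_gt0 // mulVf // => /(_ (lexx 1)).
  by rewrite ler_pdivrMl // mulrC.
have hB3 : forall k s w, normCv (mv (Mk A k s) w) <= N' * normCv w.
  move=> k s w; rewrite mv_psi.
  apply: le_trans (normCvD _ _) _.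
  rewrite !normCvZ.
  have e := heps k; move/andP: e => [e0 e1].
  have hm : 0 < (n.-1)%:R :> R by rewrite ltr0n nm1_gt0.
  have hS : normCv (fun i => \sum_(t < n | t != s) mv (Ar A t) w i) <= (n.-1)%:R * (N' * normCv w).
    apply: le_trans (normCv_sum _ _ _) _.
    apply: le_trans (ler_sum _ (fun t _ => hB2 t w)) _.
    have hc : #|(fun t : 'I_n => t != s)| = n.-1.
      by rewrite -(card_neq s); apply: eq_card.
    by rewrite sumr_const hc mulr_natl.
  rewrite ger0_norm; last by rewrite subr_ge0 ltW.
  rewrite ger0_norm; last by rewrite divr_ge0 // ltW.
  set X := normCv _ in hS *; set W := normCv w.
  have h1 : (1 - eps k) * normCv (mv (Ar A s) w) <= (1 - eps k) * (N' * W).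
    by apply: ler_wpM2l; [rewrite subr_ge0; exact: ltW| exact: hB2].
  have h2 : eps k / (n.-1)%:R * X <= eps k * (N' * W).
    apply: le_trans (ler_wpM2l _ hS) _; first by rewrite divr_ge0 // ltW.
    have -> : eps k / (n.-1)%:R * ((n.-1)%:R * (N' * normCv w)) = eps k * (N' * W).
      by rewrite /W; field; rewrite gt_eqF.
    by [].
  by rewrite (le_trans (lerD h1 h2)) // -mulrDl subrK mul1r.
apply: ge_ereal_sup => _ [xs [hxsH hxs1] <-]; rewrite lee_fin.
set Y := (fun i k s => \sum_j Psi eps (A i j) (xs j) k s).
have hrow : forall k, \sum_i rowsq (Y i) k <= N' ^+ 2 * \sum_j rowsq (xs j) k.
  move=> k; rewrite /rowsq exchange_big [X in _ <= _ * X]exchange_big /= mulr_sumr.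
  apply: ler_sum => s _.
  have -> : \sum_i csq (Y i k s) = normCv (mv (Mk A k s) (fun j => xs j k s)) ^+ 2.
    by rewrite normCv_sq.
  have -> : \sum_j csq (xs j k s) = normCv (fun j => xs j k s) ^+ 2 by rewrite normCv_sq.
  have := hB3 k s (fun j => xs j k s).
  have := normCv_ge0 (mv (Mk A k s) (fun j => xs j k s)).
  have := normCv_ge0 (fun j => xs j k s).
  nra.
have hE : (\sum_i sqnormH (Y i) <= (N' ^+ 2)%:E * \sum_j sqnormH (xs j))%E.
  rewrite /sqnormH -!nneseries_sum; last first.
  - by move=> i k _; apply: e0le; apply: rowsq_ge0.
  - by move=> i k _; apply: e0le; apply: rowsq_ge0.
  rewrite -nneseriesZl; last by move=> k _; apply: sume_ge0 => j _; apply: e0le; apply: rowsq_ge0.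
  apply: lee_nneseries => [k _ _|k _]; first by apply: sume_ge0 => j _; apply: e0le; apply: rowsq_ge0.
  rewrite !sumEFin -EFinM lee_fin; exact: hrow k.
have hfin : forall j, sqnormH (xs j) \is a fin_num.
  by move=> j; rewrite ge0_fin_numE ?sqnormH_ge0 //; exact: hxsH.
set Q := \sum_j fine (sqnormH (xs j)).
have hQ : \sum_j sqnormH (xs j) = Q%:E.
  by rewrite /Q -sumEFin; apply: eq_bigr => j _; rewrite fineK.
have hQ1 : Q <= 1.
  move: hxs1; rewrite /normHm (eq_bigr (fun j => fine (sqnormH (xs j)))); last first.
    by move=> j _; rewrite /normH sqr_sqrtr // fine_ge0 // sqnormH_ge0.
  move=> h; rewrite -(@ler_sqrt _ Q 1) // sqrtr1; exact: h.
rewrite hQ -EFinM in hE.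
have hYfin : forall i, sqnormH (Y i) \is a fin_num.
  move=> i; rewrite ge0_fin_numE ?sqnormH_ge0 //.
  apply: le_lt_trans (le_trans _ hE) (ltry _).
  rewrite (bigD1 i) //= leeDl //; apply: sume_ge0 => j _; exact: sqnormH_ge0.
have hS : \sum_i sqnormH (Y i) = (\sum_i fine (sqnormH (Y i)))%:E.
  by rewrite -sumEFin; apply: eq_bigr => i _; rewrite fineK.
rewrite hS lee_fin in hE.
rewrite /normHm; apply: sqrt_le => //.
rewrite (eq_bigr (fun i => fine (sqnormH (Y i)))); last first.
  by move=> i _; rewrite /normH sqr_sqrtr // fine_ge0 // sqnormH_ge0.
apply: (le_trans hE).
have : 0 <= N' ^+ 2 by apply: sqr_ge0.
have : 0 <= Q by apply: sumr_ge0 => j _; apply: fine_ge0; apply: sqnormH_ge0.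
nra.
Qed.

Definition sing k (r : 'I_n) (c : C) : vH :=
  fun k' s => if (k' == k) && (s == r) then c else 0.

Lemma csq0 : csq (0 : C) = 0.
Proof. by rewrite /csq /= expr0n /= addr0. Qed.

Lemma rowsq_sing k r c k' : rowsq (sing k r c) k' = if k' == k then csq c else 0.
Proof.
rewrite /rowsq /sing; case: (k' == k) => /=.
  rewrite (bigD1 r) //= eqxx big1 ?addr0 // => s hs.
  by rewrite (negbTE hs) csq0.
by rewrite big1 // => s _; rewrite csq0.
Qed.

Lemma sqnormH_sing k r c : sqnormH (sing k r c) = (csq c)%:E.
Proof.
rewrite /sqnormH.
rewrite (@eq_eseriesr _ _ (fun k' => (if k' == k then csq c else 0)%:E)); last first.
  by move=> k' _; exact: (congr1 EFin (rowsq_sing k r c k')).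
rewrite (@nneseriesD1 _ _ k) //; last first.
  by move=> k' _; apply: e0le; case: (k' == k); rewrite ?csq_ge0.
rewrite eqxx eseries0 ?adde0 // => k' _ /andP[_ hk'].
by rewrite (negbTE hk').
Qed.

Lemma normHm_sing m k r (w : 'I_m -> C) : normHm (fun j => sing k r (w j)) = normCv w.
Proof.
rewrite /normHm /normCv; congr Num.sqrt; apply: eq_bigr => j _.
by rewrite /normH sqnormH_sing /= sqr_sqrtr // csq_ge0.
Qed.

Lemma T_sing m (A : 'I_m -> 'I_m -> linf R n) k r v :
  (fun i k' s => \sum_j Psi eps (A i j) (sing k r (v j)) k' s) =
  (fun i => sing k r (mv (Mk A k r) v i)).
Proof.
apply/funext => i; apply/funext => k'; apply/funext => s.
rewrite /Psi /sing /mv /Mk; case: ifP => [/andP[/eqP -> /eqP ->]|_] //.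
by rewrite big1 // => j _; rewrite mulr0.
Qed.

Lemma lower m (A : 'I_m -> 'I_m -> linf R n) :
  (mnorm_linf A <= mnorm_BH (fun i j => Psi eps (A i j)))%E.
Proof.
apply: ge_ereal_sup => _ [r _ <-].
apply: ge_ereal_sup => _ [v /= hv <-].
have hk : forall k, ((normCv (mv (Mk A k r) v))%:E <= mnorm_BH (fun i j => Psi eps (A i j)))%E.
  move=> k; apply: ereal_sup_ubound.
  exists (fun j => sing k r (v j)).
    split; first by move=> j; rewrite /inH sqnormH_sing ltry.
    by rewrite normHm_sing.
  by rewrite T_sing normHm_sing.
case hB: (mnorm_BH _) hk => [B| |] hk; [|by rewrite leey|by have := hk 0%N; rewrite leeNy_eq].
rewrite lee_fin.
set D := fun i => mv (Ar A r) v i - ((((n.-1)%:R)^-1 : R)%:C)%C *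
   \sum_(t < n | t != r) mv (Ar A t) v i.
apply: (@lim_le _ _ (normCv D)) => [|k]; first exact: normCv_ge0.
have hk' := hk k; rewrite lee_fin in hk'.
change (normCv (mv (Ar A r) v) <= B + eps k * normCv D).
have -> : mv (Ar A r) v = fun i => mv (Mk A k r) v i + ((eps k)%:C)%C * D i.
  apply/funext => i; rewrite mv_psi /D.
  rewrite (_ : ((eps k / (n.-1)%:R)%:C)%C = ((eps k)%:C)%C * ((((n.-1)%:R)^-1 : R)%:C)%C); last first.
    by rewrite -rmorphM.
  rewrite rmorphB rmorph1 /=; ring.
apply: le_trans (normCvD _ _) _; rewrite normCvZ ger0_norm; last first.
  by case/andP: (heps k) => h _; exact: ltW.
by rewrite lerD2r.
Qed.

Theorem part1 : unital_complete_isometry (@Psi R n eps).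
Proof.
split.
- move=> c a b x hx; apply/funext => k; apply/funext => i.
  rewrite /Psi /psi big_split /= -mulr_sumr; ring.
- by move=> x hx; rewrite Psi1.
move=> m A; apply/eqP; rewrite eq_le; apply/andP; split; [exact: lower | exact: upper].
Qed.
End Q.

Unset Implicit Arguments.

Theorem mainTheorem17 (R : realType) (n : nat) (eps : nat -> R) :
  (2 <= n)%N ->
  (forall k, 0 < eps k < 1) ->
  (forall k, eps k.+1 < eps k) ->
  eps @ \oo --> 0 ->
  unital_complete_isometry (@Psi R n eps)
  /\ (forall p q : op R n, projection p -> projection q ->
        (forall (a : linf R n) (x : vecH R n), inH x ->
           (fun k i => Psi eps a x k i - q (Psi eps a x) k i)
           = Psi eps a (fun k i => x k i - p x k i)) ->
        triple_morphism (fun a x k i => Psi eps a x k i - q (Psi eps a x) k i) ->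
        op_eq p (@idop R n) /\ op_eq q (@idop R n))
  /\ (forall p : op R n, projection p ->
        (forall (a : linf R n) (x : vecH R n), inH x ->
           (fun k i => Psi eps a x k i - p (Psi eps a x) k i)
           = Psi eps a (fun k i => x k i - p x k i)) ->
        star_hom (fun a x k i => Psi eps a x k i - p (Psi eps a x) k i) ->
        op_eq p (@idop R n)).
Proof.
move=> hn heps hdec hlim; split; first exact: (part1 hn heps hlim).
split; [move=> p q; exact: (part2 hn heps) | move=> p; exact: (part3 hn heps)].
Qed.
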